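(* Let $\mathcal{R}$ be a right amenable cell space with finite stabiliser $G_0$, let $Q$ be a finite set with at least two elements, and let $\mathcal{F}=(F_i)_{i\in I}$ be a right Følner net in $\mathcal{R}$. Let $X\subseteq Q^M$, let $E,E'$ be nonempty finite subsets of $G/G_0$, and let $T$ be an $(E,E')$-tiling of $\mathcal{R}$ such that for every $t\in T$ we have $\pi_{t\triangleleft E}(X)\subsetneq Q^{t\triangleleft E}$. Then $\mathrm{h}_{\mathcal{F}}(X)<\log|Q|$.
   Context: A cell space $\mathcal{R}$ consists of a group $G$ acting transitively on the left on a nonempty set $M$ via $\triangleright$, a point $m_0\in M$ and a family $(g_{m_0,m})_{m\in M}$ in $G$ with $g_{m_0,m}\triangleright m_0=m$. $G_0$ is the stabiliser of $m_0$ and $G/G_0$ the set of left cosets. The right semi-action $\triangleleft\colon M\times G/G_0\to M$ is $m\triangleleft gG_0=g_{m_0,m}g\triangleright m_0$; $m\triangleleft E=\{m\triangleleft e:e\in E\}$. $\mathcal{R}$ is right amenable if there is a finitely additive probability measure $\mu$ on the power set of $M$ such that $\mu(\{a\triangleleft\mathfrak{g}:a\in A\})=\mu(A)$ whenever $\mathfrak{g}\in G/G_0$, $A\subseteq M$ and $m\mapsto m\triangleleft\mathfrak{g}$ is injective on $A$. A right Følner net in $\mathcal{R}$ is a net $(F_i)_{i\in I}$ (over a directed set) of nonempty finite subsets of $M$ with $\lim_{i}\frac{|F_i\setminus\{m: m\triangleleft\mathfrak{g}\in F_i\}|}{|F_i|}=0$ for every $\mathfrak{g}\in G/G_0$. A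 subset $T\subseteq M$ is an $(E,E')$-tiling if $(t\triangleleft E)_{t\in T}$ is pairwise disjoint and $(t\triangleleft E')_{t\in T}$ covers $M$. For $A\subseteq M$, $\pi_A\colon Q^M\to Q^A$ is restriction; $\mathrm{h}_{\mathcal{F}}(X)=\limsup_{i\in I}\frac{\log|\pi_{F_i}(X)|}{|F_i|}$. *)

(* Defs.v *)
From HB Require Import structures.
From mathcomp Require Import all_boot all_order all_algebra.
From mathcomp Require Import finmap.
From mathcomp Require Import all_classical all_reals all_analysis.
Set Implicit Arguments. Unset Strict Implicit. Unset Printing Implicit Defensive.
Import Order.TTheory GRing.Theory Num.Theory.
Local Open Scope classical_set_scope.
Local Open Scope fset_scope.
Local Open Scope ring_scope.

(* A cell space: a group G acting transitively on the left on M, a base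
   point m0 and coordinates g_{m0,m} with g_{m0,m} |> m0 = m. *)
Record cell_space := CellSpace {
  cs_G : Type;
  cs_mul : cs_G -> cs_G -> cs_G;
  cs_inv : cs_G -> cs_G;
  cs_one : cs_G;
  cs_mulA : forall a b c, cs_mul a (cs_mul b c) = cs_mul (cs_mul a b) c;
  cs_mul1g : forall a, cs_mul cs_one a = a;
  cs_mulVg : forall a, cs_mul (cs_inv a) a = cs_one;
  cs_M : choiceType;
  cs_act : cs_G -> cs_M -> cs_M;
  cs_act1 : forall m, cs_act cs_one m = m;
  cs_actM : forall g h m, cs_act (cs_mul g h) m = cs_act g (cs_act h m);
  cs_m0 : cs_M;
  cs_coord : cs_M -> cs_G;
  cs_coordP : forall m, cs_act (cs_coord m) cs_m0 = m
  (* transitivity of the action follows from cs_coordP *)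
}.

Section CellSpaceDefs.
Variable R : realType.
Variable S : cell_space.
Local Notation G := (cs_G S).
Local Notation M := (cs_M S).

Definition stabiliser : set G := [set g | cs_act g (cs_m0 S) = cs_m0 S].

(* right semi-action  m <| gG_0 := g_{m0,m} g |> m0.  An element of G/G_0
   is represented by any of its representatives g (the value does not
   depend on the choice since G_0 fixes m0). *)
Definition rsa (m : M) (g : G) : M := cs_act (cs_mul (cs_coord m) g) (cs_m0 S).

Definition rsa_set (m : M) (E : seq G) : {fset M} := [fset x | x in [seq rsa m g | g <- E]].

Definition right_amenable : Prop :=
  exists mu : set M -> R,
    [/\ (forall A, 0 <= mu A),
        mu setT = 1,
        (forall A B, (A `&` B)%classic = set0 -> mu (A `|` B)%classic = mu A + mu B) &
        (forall (g : G) (A : set M),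
            (forall a b, A a -> A b -> rsa a g = rsa b g -> a = b) ->
            mu [set rsa a g | a in A] = mu A)].

Definition directed {I : Type} (le : I -> I -> Prop) : Prop :=
  [/\ inhabited I, (forall i, le i i),
      (forall i j k, le i j -> le j k -> le i k) &
      (forall i j, exists k, le i k /\ le j k)].

Definition net_to0 {I : Type} (le : I -> I -> Prop) (a : I -> R) : Prop :=
  forall eps : R, 0 < eps -> exists i0, forall i, le i0 i -> `|a i| < eps.

Definition right_folner {I : Type} (le : I -> I -> Prop) (F : I -> {fset M}) : Prop :=
  (forall i, F i != fset0) /\
  forall g : G,
    net_to0 le (fun i =>
      (#|` [fset m in F i | rsa m g \notin F i]|)%:R / (#|` F i|)%:R).

Definition tiling (E E' : seq G) (T : set M) : Prop :=
  (forall t t', T t -> T t' -> t <> t' ->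
     [disjoint rsa_set t E & rsa_set t' E]%fset) /\
  (forall m, exists2 t, T t & m \in rsa_set t E').

End CellSpaceDefs.

Definition patproj {M : choiceType} {Q : finType} (A : {fset M}) (X : set (M -> Q))
  : {set {ffun A -> Q}} :=
  [set f : {ffun A -> Q} | `[< exists2 x, X x & forall a : A, f a = x (fsval a) >]].

Definition net_limsup {R : realType} {I : Type} (le : I -> I -> Prop) (a : I -> R) : \bar R :=
  ereal_inf [set ereal_sup [set (a j)%:E | j in [set j | le i j]] | i in [set: I]].

Definition entropy {R : realType} {I : Type} (le : I -> I -> Prop) {M : choiceType} {Q : finType}
  (F : I -> {fset M}) (X : set (M -> Q)) : \bar R :=
  net_limsup le (fun i => ln (#|patproj (F i) X|)%:R / (#|` F i|)%:R).

(* Main.v *)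
Require Import Defs.
From HB Require Import structures.
From mathcomp Require Import all_boot all_order all_algebra.
From mathcomp Require Import finmap.
From mathcomp Require Import all_classical all_reals all_analysis.
From mathcomp Require Import lra.
Import Order.TTheory GRing.Theory Num.Theory.
Local Open Scope classical_set_scope.
Local Open Scope ring_scope.

Section PatA.
Variables (M : choiceType) (Q : finType) (Y : set (M -> Q)).

Definition restr {A B : {fset M}} (sub : (A `<=` B)%fset) (f : {ffun B -> Q}) : {ffun A -> Q} :=
  [ffun a : A => f [` fsubsetP sub (fsval a) (fsvalP a)]%fset].

Lemma patprojP (A : {fset M}) (f : {ffun A -> Q}) :
  f \in patproj A Y <-> exists2 x, Y x & forall a : A, f a = x (fsval a).
Proof. by rewrite inE; split => [/asboolP|H]; [|apply/asboolP]. Qed.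

Lemma patproj_card_le (A : {fset M}) : (#|patproj A Y| <= #|Q| ^ #|` A|)%N.
Proof. by apply: leq_trans (max_card _) _; rewrite card_ffun cardfE. Qed.

Lemma patproj_card_lt (A : {fset M}) :
  (patproj A Y \proper [set: {ffun A -> Q}])%SET -> (#|patproj A Y| < #|Q| ^ #|` A|)%N.
Proof. by move/proper_card; rewrite cardsT card_ffun cardfE. Qed.

Lemma patprojU (A B : {fset M}) :
  (#|patproj (A `|` B)%fset Y| <= #|patproj A Y| * #|patproj B Y|)%N.
Proof.
pose phi (f : {ffun (A `|` B)%fset -> Q}) :=
  (restr (@fsubsetUl _ A B) f, restr (@fsubsetUr _ A B) f).
have phiI : injective phi.
  move=> f g [e1 e2]; apply/ffunP => c.
  have /fsetUP[cA|cB] := fsvalP c.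
    have := congr1 (fun h : {ffun A -> Q} => h [` cA]%fset) e1; rewrite !ffunE.
    by have -> : [` fsubsetP (fsubsetUl A B) (fsval [` cA]%fset) (fsvalP [` cA]%fset)]%fset = c
      by apply: val_inj.
  have := congr1 (fun h : {ffun B -> Q} => h [` cB]%fset) e2; rewrite !ffunE.
  by have -> : [` fsubsetP (fsubsetUr A B) (fsval [` cB]%fset) (fsvalP [` cB]%fset)]%fset = c
    by apply: val_inj.
rewrite -cardsX -(card_imset _ phiI); apply: subset_leq_card.
apply/fintype.subsetP => p /imsetP[f /patprojP[x Yx fx] ->].
rewrite inE /=; apply/andP; split; apply/patprojP; exists x => // a;
  by rewrite ffunE fx.
Qed.

End PatA.
Section PatB.
Variables (R : realType) (M : choiceType) (Q : finType) (Y : set (M -> Q)).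
Hypothesis Q0 : (0 < #|Q|)%N.

Definition nu (D : {fset M}) : R := (#|patproj D Y|)%:R / ((#|Q| ^ #|` D|)%N%:R).

Lemma nu_ge0 (D : {fset M}) : 0 <= nu D.
Proof. by rewrite /nu divr_ge0. Qed.

Lemma qpos (D : {fset M}) : 0 < ((#|Q| ^ #|` D|)%N%:R : R).
Proof. by rewrite ltr0n expn_gt0 Q0. Qed.

Lemma nu_le1 (D : {fset M}) : nu D <= 1.
Proof. by rewrite /nu ler_pdivrMr ?qpos // mul1r ler_nat patproj_card_le. Qed.

Lemma nuU (A B : {fset M}) : [disjoint A & B]%fset -> nu (A `|` B)%fset <= nu A * nu B.
Proof.
move=> dAB.
have eC : #|` (A `|` B)%fset| = (#|` A| + #|` B|)%N.
  by have := (leq_card_fsetU A B).2; rewrite dAB => /eqP.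
rewrite /nu mulf_div eC expnD natrM ler_wpM2r // ?invr_ge0 // -natrM ler_nat.
exact: patprojU.
Qed.

Lemma nu_tiles (Af : M -> {fset M}) (rho : R) (r0 : 0 <= rho) (ts : seq M) :
  uniq ts -> forall D, (forall t, t \in ts -> (Af t `<=` D)%fset) ->
  (forall t t', t \in ts -> t' \in ts -> t != t' -> [disjoint Af t & Af t']%fset) ->
  (forall t, t \in ts -> nu (Af t) <= rho) -> nu D <= rho ^+ size ts.
Proof.
elim: ts => [|t ts IH] /=; first by move=> *; rewrite expr0 nu_le1.
move=> /andP[tn uts] D sub dis hnu.
have subt := sub t (mem_head _ _).
have mb : forall y, y \in ts -> y \in t :: ts by move=> y yin; rewrite inE yin orbT.
have eD : D = (Af t `|` (D `\` Af t))%fset.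
  apply/fsetP=> x; rewrite !inE; case: (boolP (x \in Af t)) => //= xA.
  by rewrite (fsubsetP subt x xA).
have dt : [disjoint Af t & (D `\` Af t)]%fset.
  by apply/fdisjointP => x xA; rewrite !inE xA.
rewrite eD exprS; apply: le_trans (nuU _ _ dt) _.
apply: ler_pM; rewrite ?nu_ge0 //; first by apply: hnu; rewrite mem_head.
apply: IH => //.
- move=> t' t'in; apply/fsubsetP => x xA; rewrite !inE.
  have tt' : t != t' by apply: contraNneq tn => ->.
  have := dis t t' (mem_head _ _) (mb _ t'in) tt'.
  move/fdisjointP_sym/(_ x xA) => -> /=.
  by apply: (fsubsetP (sub t' (mb _ t'in))).
- by move=> a b ain bin; apply: dis; apply: mb.
- by move=> a ain; apply: hnu; apply: mb.
Qed.
End PatB.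
From Stdlib Require List.
Lemma in_In (T : eqType) (x : T) (s : seq T) : x \in s -> List.In x s.
Proof. elim: s => //= y s IH; rewrite inE => /orP[/eqP->|/IH]; by [left|right]. Qed.

Lemma has_In (T : Type) (p : pred T) (x : T) (s : seq T) : List.In x s -> p x -> has p s.
Proof. elim: s => //= y s IH [<- ->//|/IH H /H ->]; exact: orbT. Qed.

Lemma hasP' (T : Type) (p : pred T) (s : seq T) : has p s -> exists x, List.In x s /\ p x.
Proof.
elim: s => //= y s IH /orP[py|/IH[x [xs px]]]; first by exists y; split; [left|].
by exists x; split; [right|].
Qed.

Lemma mem_map_In (T : Type) (U : eqType) (f : T -> U) (s : seq T) y :
  y \in map f s -> exists x, List.In x s /\ y = f x.
Proof.
elim: s => //= x s IH; rewrite inE => /orP[/eqP->|/IH[z [zs ->]]].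
  by exists x; split; [left|].
by exists z; split; [right|].
Qed.

Lemma card_bigfcup_le (T : choiceType) (I : Type) (r : seq I) (Fs : I -> {fset T}) c :
  (forall i, (#|` Fs i| <= c)%N) -> (#|` (\bigcup_(i <- r) Fs i)%fset| <= size r * c)%N.
Proof.
move=> hc; elim: r => [|i r IH]; first by rewrite big_nil cardfs0.
rewrite big_cons /= mulSn; apply: leq_trans (leq_card_fsetU _ _).1 _.
exact: leq_add.
Qed.

Lemma sum_le_nat (R : realType) (I : Type) (r : seq I) (f : I -> nat) (a : R) :
  (forall i, List.In i r -> (f i)%:R <= a) -> ((\sum_(i <- r) f i)%N)%:R <= (size r)%:R * a.
Proof.
elim: r => [|i r IH] h; first by rewrite big_nil mul0r.
rewrite big_cons natrD /= -addn1 natrD mulrDl mul1r addrC.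
apply: lerD; last by apply: h; left.
by apply: IH => j jr; apply: h; right.
Qed.

Lemma directed_list (I : Type) (le : I -> I -> Prop) (hI : directed le) (J : Type) (r : seq J)
  (P : J -> I -> Prop) :
  (forall j, List.In j r -> exists i0, forall i, le i0 i -> P j i) ->
  exists i0, forall i, le i0 i -> forall j, List.In j r -> P j i.
Proof.
case: hI => [[i00] _ tr dir].
elim: r => [|j r IH] h; first by exists i00.
have [i1 h1] := h j (or_introl erefl).
have [i2 h2] := IH (fun j' jr => h j' (or_intror jr)).
have [k [k1 k2]] := dir i1 i2.
exists k => i ki j' [<-|j'r]; first by apply: h1; exact: tr ki.
by apply: h2 => //; exact: tr ki.
Qed.

Section Cell.
Variable S : cell_space.
Local Notation G := (cs_G S).
Local Notation M := (cs_M S).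
Local Notation mul := (@cs_mul S).
Local Notation inv := (@cs_inv S).
Local Notation one := (@cs_one S).

Lemma mulgV' (a : G) : mul a (inv a) = one.
Proof.
have e : mul (inv (inv a)) (inv a) = one by rewrite cs_mulVg.
rewrite -[mul a _]cs_mul1g -{1}e -cs_mulA (cs_mulA (inv a) a) cs_mulVg cs_mul1g.
exact: e.
Qed.

Lemma mulg1' (a : G) : mul a one = a.
Proof. by rewrite -(cs_mulVg a) cs_mulA mulgV' cs_mul1g. Qed.

Lemma rsa_setP (t : M) (E : seq G) x :
  x \in rsa_set t E -> exists e, List.In e E /\ x = rsa t e.
Proof. by rewrite /rsa_set inE => /mem_map_In. Qed.

Lemma rsa_set_in (t : M) (E : seq G) e : List.In e E -> rsa t e \in rsa_set t E.
Proof.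
rewrite /rsa_set inE; elim: E => //= e' E IH [->|/IH]; rewrite inE ?eqxx //.
by move=> ->; rewrite orbT.
Qed.

Lemma card_rsa_set (t : M) (E : seq G) : (#|` rsa_set t E| <= size E)%N.
Proof.
by rewrite /rsa_set card_fseq (leq_trans (size_undup _)) ?size_map.
Qed.

Lemma stab_elt (m t : M) (e' : G) : m = rsa t e' ->
  stabiliser (mul (inv (cs_coord m)) (mul (cs_coord t) e')).
Proof.
move=> me; rewrite /stabiliser /= cs_actM.
have -> : cs_act (mul (cs_coord t) e') (cs_m0 S) = m by rewrite me.
have h : cs_act (inv (cs_coord m)) (cs_act (cs_coord m) (cs_m0 S)) = cs_m0 S.
  by rewrite -cs_actM cs_mulVg cs_act1.
by rewrite cs_coordP in h.
Qed.

Lemma rsa_shift (m t : M) (e' e : G) :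
  rsa m (mul (mul (mul (inv (cs_coord m)) (mul (cs_coord t) e')) (inv e')) e) = rsa t e.
Proof.
rewrite /rsa; congr (cs_act _ _).
rewrite !cs_mulA mulgV' cs_mul1g -(cs_mulA _ e' (inv e')) mulgV' mulg1'.
by [].
Qed.
End Cell.
Lemma card_has_le (T : choiceType) (J : Type) (A : {fset T}) (p : J -> T -> bool) (r : seq J) :
  (#|` [fset x in A | has (fun j => p j x) r]%fset| <= \sum_(j <- r) #|` [fset x in A | p j x]%fset|)%N.
Proof.
elim: r => [|j r IH].
  rewrite big_nil leqn0 cardfs_eq0; apply/eqP/fsetP => x; by rewrite !inE andbF.
rewrite big_cons; apply: leq_trans (leq_add (leqnn _) IH).
apply: leq_trans (leq_card_fsetU _ _).1.
apply: fsubset_leq_card; apply/fsubsetP => x; rewrite !inE /=.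
by case: (x \in A) => //=; case: (p j x).
Qed.

Lemma nu_proper_le (R : realType) (M : choiceType) (Q : finType) (Y : set (M -> Q))
   (q0 : (0 < #|Q|)%N) (A : {fset M}) (s : nat) :
  (#|` A| <= s)%N -> (patproj A Y \proper [set: {ffun A -> Q}])%SET ->
  nu R M Q Y A <= 1 - ((#|Q| ^ s)%N%:R)^-1.
Proof.
move=> As /patproj_card_lt hlt.
have qa0 : 0 < ((#|Q| ^ #|` A|)%N%:R : R) by rewrite ltr0n expn_gt0 q0.
have qs0 : 0 < ((#|Q| ^ s)%N%:R : R) by rewrite ltr0n expn_gt0 q0.
have h1 : (#|patproj A Y|%:R : R) <= (#|Q| ^ #|` A|)%N%:R - 1.
  have := hlt; rewrite -(ler_nat R) -addn1 natrD => h; lra.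
have h2 : ((#|Q| ^ #|` A|)%N%:R : R) / (#|Q| ^ s)%N%:R <= 1.
  by rewrite ler_pdivrMr // mul1r ler_nat leq_pexp2l.
rewrite /nu ler_pdivrMr // mulrBl mul1r mulrC; lra.
Qed.
Theorem lemma9 (R : realType) (S : cell_space)
  (amen : right_amenable R S)
  (G0fin : finite_set (@stabiliser S))
  (Q : finType) (hQ : (1 < #|Q|)%N)
  (I : Type) (le : I -> I -> Prop) (hI : directed le)
  (F : I -> {fset cs_M S}) (hF : @right_folner R S I le F)
  (X : set (cs_M S -> Q))
  (E E' : seq (cs_G S)) (hE : E <> [::]) (hE' : E' <> [::])
  (T : set (cs_M S)) (hT : @tiling S E E' T)
  (hproper : forall t, T t ->
     (patproj (@rsa_set S t E) X \proper [set: {ffun @rsa_set S t E -> Q}])%SET) :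
  (@entropy R I le (cs_M S) Q F X < (ln (#|Q|%:R : R))%:E)%E.
Proof.
have q0 : (0 < #|Q|)%N by apply: ltn_trans hQ.
have [Hs eHs] := (@finite_seqP {classic (cs_G S)} (@stabiliser S)).1 G0fin.
have HsP : forall h, @stabiliser S h -> List.In h Hs.
  by move=> h; rewrite eHs => /in_In.
pose P : seq (cs_G S) := List.flat_map (fun h => List.flat_map (fun e' =>
   map (fun e => cs_mul (cs_mul h (cs_inv e')) e) E) E') Hs.
have PIn : forall h e' e, @stabiliser S h -> List.In e' E' -> List.In e E ->
    List.In (cs_mul (cs_mul h (cs_inv e')) e) P.
  move=> h e' e hs e'E eE; apply (proj2 (List.in_flat_map _ _ _)); exists h; split; first exact: HsP.
  apply (proj2 (List.in_flat_map _ _ _)); exists e'; split => //.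
  exact: List.in_map.
case: hT => hTd hTc.
pose tau := fun m => s2val (cid2 (hTc m)).
have tauT : forall m, T (tau m) by move=> m; exact: (s2valP (cid2 (hTc m))).
have tauE : forall m, m \in rsa_set (tau m) E' by move=> m; exact: (s2valP' (cid2 (hTc m))).
have good : forall (D : {fset cs_M S}) m, (forall g, List.In g P -> rsa m g \in D) ->
    (rsa_set (tau m) E `<=` D)%fset.
  move=> D m hg; apply/fsubsetP => x /rsa_setP [e [eE ->]].
  have [e' [e'E me]] := @rsa_setP S _ _ _ (tauE m).
  rewrite -(@rsa_shift S m (tau m) e' e); apply: hg; apply: PIn => //.
  exact: (@stab_elt S _ _ _ me).
case: hF => Fne Fconv.
pose L := size P.
pose eps : R := ((2 * L.+1)%N%:R)^-1.
have eps0 : 0 < eps by rewrite invr_gt0 ltr0n muln_gt0.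
have [i0 hi0] := @directed_list I le hI (cs_G S) P
  (fun g i => `|(#|` [fset m in F i | rsa m g \notin F i]%fset|)%:R / (#|` F i|)%:R| < eps)
  (fun g _ => Fconv g eps eps0).
pose q := #|Q|.
pose s := size E.
pose sE' := size E'.
have s0 : (0 < s)%N by rewrite /s; case: (E) hE.
have sE'0 : (0 < sE')%N by rewrite /sE'; case: (E') hE'.
pose rho : R := 1 - ((q ^ s)%N%:R)^-1.
pose c : R := ((2 * sE')%N%:R)^-1.
have c0 : 0 < c by rewrite invr_gt0 ltr0n muln_gt0.
have qs1 : 1 < ((q ^ s)%N%:R : R).
  rewrite ltr1n; apply: leq_trans hQ _; have := leq_pexp2l q0 s0; by rewrite expn1.
have rho0 : 0 < rho < 1.
  apply/andP; split; rewrite /rho.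
    by rewrite subr_gt0 invf_lt1 // (lt_trans ltr01).
  by rewrite ltrBlDr ltrDl invr_gt0 (lt_trans ltr01).
have lnrho : ln rho < 0 by apply: ln_lt0.
pose b := Num.max (ln (q%:R : R) + c * ln rho) 0.
have claim : forall j, le i0 j ->
    ln (#|patproj (F j) X|)%:R / (#|` F j|)%:R <= b.
  move=> j hj.
  have n0 : (0 < #|` F j|)%N by rewrite cardfs_gt0 Fne.
  have n0R : 0 < (#|` F j|)%:R :> R by rewrite ltr0n.
  pose badp := fun m => has (fun g => rsa m g \notin F j) P.
  pose Bad := [fset m in F j | badp m]%fset.
  pose Gd := [fset m in F j | ~~ badp m]%fset.
  have hn : #|` F j| = (#|` Gd| + #|` Bad|)%N.
    have e1 : (F j `&` Bad)%fset = Bad.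
      by apply/fsetP => x; rewrite /Bad !inE; case: (x \in F j).
    have e2 : (F j `\` Bad)%fset = Gd.
      by apply/fsetP => x; rewrite /Bad /Gd !inE; case: (x \in F j); case: (badp x).
    by rewrite -(cardfsID Bad (F j)) e1 e2 addnC.
  have hB : (#|` Bad|%:R : R) <= (#|` F j|)%:R / 2.
    have h1 : (#|` Bad| <= \sum_(g <- P) #|` [fset m in F j | rsa m g \notin F j]%fset|)%N
      := @card_has_le _ _ (F j) (fun g m => rsa m g \notin F j) P.
    have h2 := @sum_le_nat R (cs_G S) P (fun g => #|` [fset m in F j | rsa m g \notin F j]%fset|)
      (eps * (#|` F j|)%:R).
    have h2' : ((\sum_(g <- P) #|` [fset m in F j | rsa m g \notin F j]%fset|)%N)%:R
        <= (size P)%:R * (eps * (#|` F j|)%:R) :> R.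
      apply: h2 => g gP; have := hi0 j hj g gP.
      rewrite ger0_norm ?divr_ge0 // ltr_pdivrMr // => /ltW //.
    have e2 : (L.+1)%:R * eps = 2^-1.
      by rewrite /eps natrM invfM mulrCA mulfV ?mulr1 // pnatr_eq0.
    have h3 : (L%:R * eps) <= (L.+1)%:R * eps by rewrite ler_wpM2r ?(ltW eps0) // ler_nat.
    have h4 : (size P)%:R * (eps * (#|` F j|)%:R) <= 2^-1 * (#|` F j|)%:R.
      by rewrite mulrA ler_wpM2r // -e2.
    move: h1; rewrite -(ler_nat R) => h1; lra.
  pose K := [fset tau m | m in Gd]%fset.
  have hK : (#|` Gd| <= #|` K| * sE')%N.
    apply: leq_trans (@card_bigfcup_le _ _ K (fun t => rsa_set t E') sE'
        (fun t => @card_rsa_set S t E')).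
    apply: fsubset_leq_card; apply/fsubsetP => x xG; apply/bigfcupP.
    exists (tau x); last exact: tauE.
    by rewrite andbT; apply/imfsetP; exists x.
  have hnu : nu R (cs_M S) Q X (F j) <= rho ^+ #|` K|.
    apply: (@nu_tiles R _ Q X q0 (fun t => rsa_set t E) rho (ltW (andP rho0).1) K (fset_uniq K) (F j)).
    - move=> t /imfsetP[m mG ->]; apply: good => g gP; move: mG; rewrite /Gd !inE.
      move=> /andP[_ nb]; apply/negPn; apply: contra nb => hn'.
      exact: (has_In _ _ _ _ gP hn').
    - move=> t t' /imfsetP[m _ ->] /imfsetP[m' _ ->] ne; apply: hTd; try exact: tauT.
      exact/eqP.
    - move=> t /imfsetP[m _ ->].
      exact: (@nu_proper_le R _ Q X q0 _ s (card_rsa_set _ _ _) (hproper _ (tauT m))).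
  move: hnu; rewrite /nu ler_pdivrMr ?ltr0n ?expn_gt0 ?q0 // => hN.
  have hKn : (#|` F j|)%:R * c <= (#|` K|)%:R.
    rewrite /c ler_pdivrMr ?ltr0n ?muln_gt0 // natrM.
    move: hK; rewrite -(ler_nat R) natrM => hK.
    move: hn => /(congr1 (fun k => k%:R : R)); rewrite natrD => hn.
    lra.
  case: (posnP #|patproj (F j) X|) => [N0|Npos].
    by rewrite N0 ln0 // mul0r le_max lexx orbT.
  rewrite le_max; apply/orP; left.
  rewrite ler_pdivrMr //.
  have hl : ln (#|patproj (F j) X|)%:R <= ln (rho ^+ #|` K| * (#|Q| ^ #|` F j|)%N%:R) :> R.
    rewrite ler_ln ?posrE ?ltr0n // mulr_gt0 ?exprn_gt0 ?(andP rho0).1 //.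
    by rewrite ltr0n expn_gt0 q0.
  move: hl; rewrite lnM ?posrE ?exprn_gt0 ?(andP rho0).1 ?ltr0n ?expn_gt0 ?q0 //.
  rewrite natrX !lnXn ?ltr0n // ?(andP rho0).1 // -(mulr_natl (ln rho)) -(mulr_natl (ln (#|Q|%:R))) => hl.
  have h := ler_wnM2r (ltW lnrho) hKn.
  lra.
rewrite /entropy /net_limsup.
apply: (@le_lt_trans _ _ b%:E).
  apply: le_trans; first apply: ereal_inf_lbound; first by exists i0.
  apply: ge_ereal_sup => y [k hk <-]; rewrite lee_fin; exact: claim.
rewrite lte_fin gt_max; apply/andP; split.
  by rewrite gtrDl pmulr_rlt0.
apply: ln_gt0; rewrite ltr1n //.
Qed.
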